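(* $\mathsf{ELCR}$ is decidable: there is an algorithm which, given a formula $\varphi\in\mathcal{L}$, decides whether $\varphi$ is satisfiable in some situation of some $k$-sight model (equivalently, whether $\varphi$ is valid on all $k$-sight models).
   Context: Fix a natural number $k$ and a vocabulary: $Pred$ (predicate symbols with arities, containing binary $R$), a nonempty finite set $Cons$ of constants, $Var=\{x,y\}$; terms $\mathsf{Term}=Cons\cup Var$. Syntax: $\mathcal{L}_{\mathsf{B}}$: $\alpha::=P(t_1,\dots,t_m)\mid t_1\equiv t_2\mid\neg\alpha\mid(\alpha\land\alpha)$; $\mathcal{L}_{\mathsf{BD}}$: $\psi::=\alpha\mid\neg\psi\mid(\psi\land\psi)\mid[z]\psi$; $\mathcal{L}$: $\varphi::=\psi\mid K_zt\mid\neg\varphi\mid(\varphi\land\varphi)\mid K_z\psi\mid[z]\varphi$ ($z\in Var$, $t\in\mathsf{Term}$). Models: $M=(\mathbf{D},\mathbf{I},\Sigma,\sim)$ with $\mathbf{D}$ nonempty finite; $\mathbf{I}(P)\subseteq\mathbf{D}^m$ for $m$-ary $P$, $\mathbf{R}:=\mathbf{I}(R)$ serial; $\mathbf{I}(c)\in\mathbf{D}$ for $c\in Cons$, every element of $\mathbf{D}$ named by some constant; $\Sigma\subseteq\mathbf{D}^{Var}$ nonempty set of situations; $\sim_x,\sim_y$ equivalence relations on $\Sigma$. $\mathbb{D}^0(s)=\{s\}$, $\mathbb{D}^{m+1}(s)=\mathbb{D}^m(s)\cup\{t:\exists u\in\mathbb{D}^m(s),(u,t)\in\mathbf{R}\text{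 or }(t,u)\in\mathbf{R}\}$. $M$ is $k$-sight if $\sigma\sim_z\sigma'$ implies $\sigma(z')=\sigma'(z')$ for every $z'\in Var$ with $\sigma(z')\in\mathbb{D}^k(\sigma(z))$. Semantics: $t^{(\mathbf{I},\sigma)}$ is $\mathbf{I}(t)$ or $\sigma(t)$; $P(t_1,\dots,t_m)$ true at $\sigma$ iff the tuple of values is in $\mathbf{I}(P)$; $t_1\equiv t_2$ iff equal values; Boolean standard; $K_zt$ true at $\sigma$ iff $t$ has the same value at all $\sigma'\in\Sigma$ with $\sigma'\sim_z\sigma$; $K_z\varphi$ true at $\sigma$ iff $\varphi$ true at all $\sigma'\in\Sigma$ with $\sigma'\sim_z\sigma$. For $[z]$: $\mathsf{R}^z\sigma\sigma'$ iff $(\sigma(z),\sigma'(z))\in\mathbf{R}$ and $\sigma(z')=\sigma'(z')$ for the other variable $z'$; $\mathsf{R}^z(\Gamma)=\{\sigma':\exists\sigma\in\Gamma,\mathsf{R}^z\sigma\sigma'\}$; $\Sigma|\sigma=\{\sigma'\in\Sigma:\sigma\sim_w\sigma'\text{ for some }w\in Var\}$; $M,\sigma_1\models[z]\varphi$ iff for all $\sigma_2\in\mathsf{R}^z(\{\sigma_1\})$, $(\mathbf{D},\mathbf{I},\Sigma',\sim'),\sigma_2\models\varphi$, where $\Sigma'=\{\sigma_2\}$ if $\sigma_2(x)\in\mathbb{D}^k(\sigma_2(y))$, and otherwise $\Sigma'=\{\sigma'\in\mathsf{R}^z(\Sigma|\sigma_1):\sigma'(x)\notin\mathbb{D}^k(\sigma'(y))\}$;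 and $\sigma'_1\sim'_w\sigma'_2$ iff $\sigma'_1(w)=\sigma'_2(w)$, for $w\in Var$. *)

(* Defs.v *)
From mathcomp Require Import all_boot.
Set Implicit Arguments. Unset Strict Implicit. Unset Printing Implicit Defensive.

Inductive Var := vx | vy.
Definition Var_eqb (a b : Var) : bool :=
  match a, b with vx, vx | vy, vy => true | _, _ => false end.
Definition other (z : Var) : Var := match z with vx => vy | vy => vx end.
Definition var_code (z : Var) : nat := match z with vx => 0 | vy => 1 end.

(* Syntax.  One inductive type of formulas; the sublanguage L is carved out  *)
(* by [inL] (the K-operators may only be applied to K-free formulas, i.e. to *)
(* formulas of L_BD).                                                        *)
Section Syntax.
Variables (Pred Cons : Type).

Inductive term := TC of Cons | TV of Var.

Inductive form :=
| FAtom of Pred & seq term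
| FEq of term & term
| FNeg of form
| FAnd of form & form
| FBox of Var & form
| FKt of Var & term
| FK of Var & form.

Fixpoint Kfree (f : form) : bool :=
  match f with
  | FAtom _ _ | FEq _ _ => true
  | FNeg g => Kfree g
  | FAnd g h => Kfree g && Kfree h
  | FBox _ g => Kfree g
  | FKt _ _ | FK _ _ => false
  end.

Fixpoint inL (f : form) : bool :=
  match f with
  | FAtom _ _ | FEq _ _ | FKt _ _ => true
  | FNeg g => inL g
  | FAnd g h => inL g && inL h
  | FBox _ g => inL g
  | FK _ g => Kfree g
  end.

Fixpoint wf (arity : Pred -> nat) (f : form) : bool :=
  match f with
  | FAtom P ts => size ts == arity P
  | FEq _ _ | FKt _ _ => true
  | FNeg g => wf arity g
  | FAnd g h => wf arity g && wf arity h
  | FBox _ g => wf arity g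
  | FK _ g => wf arity g
  end.
End Syntax.

Section Semantics.
Variables (k : nat) (Pred : Type) (arity : Pred -> nat) (R : Pred) (Cons : finType).

(* A situation sigma : Var -> D is represented by the pair (sigma x, sigma y). *)
Definition get (D : Type) (s : D * D) (z : Var) : D :=
  match z with vx => s.1 | vy => s.2 end.

Unset Implicit Arguments.
Record model := Model {
  mD : finType;
  mI : Pred -> pred (seq mD);
  mIc : Cons -> mD;
  mSigma : {set mD * mD};
  msim : Var -> rel (mD * mD)
}.
Set Implicit Arguments.

Section OneModel.
Variables (D : finType) (I : Pred -> pred (seq D)) (Ic : Cons -> D).

Definition Rrel (a b : D) : bool := I R [:: a; b].

Fixpoint Dk (m : nat) (a : D) : {set D} :=
  match m with
  | 0 => [set a]
  | m'.+1 => Dk m' a :|: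
      [set t | [exists u in Dk m' a, Rrel u t || Rrel t u]]
  end.

Definition tval (s : D * D) (t : term Cons) : D :=
  match t with TC c => Ic c | TV z => get s z end.

Definition Rz (z : Var) (s s' : D * D) : bool :=
  Rrel (get s z) (get s' z) && (get s (other z) == get s' (other z)).

Definition Rzimg (z : Var) (G : {set D * D}) : {set D * D} :=
  [set s' | [exists s in G, Rz z s s']].

Definition restr (Sig : {set D * D}) (sim : Var -> rel (D * D)) (s : D * D)
  : {set D * D} :=
  [set s' in Sig | [exists w : bool, sim (if w then vx else vy) s s']].

Definition near (s : D * D) : bool := get s vx \in Dk k (get s vy).

Definition newSigma (Sig : {set D * D}) (sim : Var -> rel (D * D))
  (z : Var) (s1 s2 : D * D) : {set D * D} :=
  if near s2 then [set s2]
  else [set s' in Rzimg z (restr Sig sim s1) | ~~ near s'].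

Definition newsim : Var -> rel (D * D) := fun w a b => get a w == get b w.

Fixpoint sat (Sig : {set D * D}) (sim : Var -> rel (D * D))
  (f : form Pred Cons) (s : D * D) {struct f} : Prop :=
  match f with
  | FAtom P ts => I P [seq tval s t | t <- ts]
  | FEq t1 t2 => tval s t1 = tval s t2
  | FNeg g => ~ sat Sig sim g s
  | FAnd g h => sat Sig sim g s /\ sat Sig sim h s
  | FKt z t => forall s1 s2, s1 \in Sig -> s2 \in Sig ->
        sim z s s1 -> sim z s s2 -> tval s1 t = tval s2 t
  | FK z g => forall s', s' \in Sig -> sim z s s' -> sat Sig sim g s'
  | FBox z g => forall s2, Rz z s s2 ->
        sat (newSigma Sig sim z s s2) newsim g s2
  end.
End OneModel.

Definition is_model (M : model) : Prop :=
  let D := mD M in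
  let I := mI M in
  let Sig := mSigma M in
  let sim := msim M in
  (exists d : D, True) /\
  (forall P (l : seq D), I P l -> size l = arity P) /\
  (forall a : D, exists b : D, I R [:: a; b]) /\
  (forall d : D, exists c, mIc M c = d) /\
  (exists s, s \in Sig) /\
  (forall z : Var,
        (forall s, s \in Sig -> sim z s s) /\
        (forall s t, s \in Sig -> t \in Sig -> sim z s t -> sim z t s) /\
        (forall s t u, s \in Sig -> t \in Sig -> u \in Sig ->
            sim z s t -> sim z t u -> sim z s u)).

Definition ksight (M : model) : Prop :=
  forall (z z' : Var) (s s' : mD M * mD M),
    s \in mSigma M -> s' \in mSigma M -> msim M z s s' ->
    get s z' \in Dk (mI M) k (get s z) ->
    get s z' = get s' z'.

Definition satisfiable (f : form Pred Cons) : Prop :=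
  exists M : model, is_model M /\ ksight M /\
    exists s, s \in mSigma M /\ sat (mI M) (mIc M) (mSigma M) (msim M) f s.
End Semantics.

(* A model of computation: (untyped) mu-recursive functions on nat.          *)
Inductive mu :=
| MZero
| MSucc
| MProj of nat
| MComp of mu & seq mu
| MRec of mu & mu
| MMin of mu.

Inductive eval : mu -> seq nat -> nat -> Prop :=
| eZero v : eval MZero v 0
| eSucc x v : eval MSucc (x :: v) x.+1
| eProj i v : i < size v -> eval (MProj i) v (nth 0 v i)
| eComp f gs v ws y : evals gs v ws -> eval f ws y -> eval (MComp f gs) v y
| eRec0 f g v y : eval f v y -> eval (MRec f g) (0 :: v) y
| eRecS f g n v r y : eval (MRec f g) (n :: v) r -> eval g (n :: r :: v) y ->
    eval (MRec f g) (n.+1 :: v) y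
| eMin f v n : eval f (n :: v) 0 ->
    (forall m, m < n -> exists r, eval f (m :: v) r.+1) ->
    eval (MMin f) v n
with evals : seq mu -> seq nat -> seq nat -> Prop :=
| esNil v : evals [::] v [::]
| esCons g gs v w ws : eval g v w -> evals gs v ws -> evals (g :: gs) v (w :: ws).

Definition cpair (a b : nat) : nat := (a + b) * (a + b).+1 %/ 2 + b.

Section Encoding.
Variables (Pred : countType) (Cons : finType).

Definition enct (t : term Cons) : nat :=
  match t with
  | TC c => cpair 0 (enum_rank c)
  | TV z => cpair 1 (var_code z)
  end.

Fixpoint encts (ts : seq (term Cons)) : nat :=
  match ts with
  | [::] => 0
  | t :: ts' => (cpair (enct t) (encts ts')).+1
  end.

Fixpoint encf (f : form Pred Cons) : nat :=
  match f with
  | FAtom P ts => cpair 0 (cpair (pickle P) (encts ts))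
  | FEq t1 t2 => cpair 1 (cpair (enct t1) (enct t2))
  | FNeg g => cpair 2 (encf g)
  | FAnd g h => cpair 3 (cpair (encf g) (encf h))
  | FBox z g => cpair 4 (cpair (var_code z) (encf g))
  | FKt z t => cpair 5 (cpair (var_code z) (enct t))
  | FK z g => cpair 6 (cpair (var_code z) (encf g))
  end.
End Encoding.

(* Main.v *)
Require Import Defs.
From mathcomp Require Import all_boot.
From Stdlib Require Import FunctionalExtensionality Lia ClassicalEpsilon.
From mathcomp Require Import zify.
Set Implicit Arguments. Unset Strict Implicit. Unset Printing Implicit Defensive.

Fixpoint iterR (n b : nat) (s : nat -> nat -> nat) : nat :=
  match n with 0 => b | i.+1 => s i (iterR i b s) end.

Inductive cexp :=
| CVar of nat | CZero | CSucc of cexp | CWk of cexp | CSh of cexp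
| CRec of cexp & cexp & cexp.

Fixpoint cden (e : cexp) (v : seq nat) : nat :=
  match e with
  | CVar i => nth 0 v i
  | CZero => 0
  | CSucc e => (cden e v).+1
  | CWk e => cden e (behead v)
  | CSh e => cden e (nth 0 v 0 :: drop 2 v)
  | CRec c b s => iterR (cden c v) (cden b v) (fun i a => cden s (i :: a :: v))
  end.

Definition projs (m k : nat) : seq mu := [seq MProj i | i <- iota m k].

Fixpoint cmp (n : nat) (e : cexp) : mu :=
  match e with
  | CVar i => if i < n then MProj i else MZero
  | CZero => MZero
  | CSucc e => MComp MSucc [:: cmp n e]
  | CWk e => MComp (cmp n.-1 e) (projs 1 n.-1)
  | CSh e => MComp (cmp (n - 2).+1 e) ((if 0 < n then MProj 0 else MZero) :: projs 2 (n - 2))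
  | CRec c b s => MComp (MRec (cmp n b) (cmp n.+2 s)) (cmp n c :: projs 0 n)
  end.

Lemma evals_projs v m k : m + k <= size v ->
  evals (projs m k) v [seq nth 0 v i | i <- iota m k].
Proof.
elim: k m => [|k IH] m H /=; first by constructor.
constructor; first by constructor; apply: leq_trans H; rewrite addnS ltnS leq_addr.
by apply: IH; rewrite addSn -addnS.
Qed.

Lemma evals_drop v m : m <= size v -> evals (projs m (size v - m)) v (drop m v).
Proof.
move=> H; have := @evals_projs v m (size v - m); rewrite subnKC // => /(_ (leqnn _)).
by rewrite map_nth_iota // take_oversize // size_drop.
Qed.

Lemma cmp_ok e n v : size v = n -> eval (cmp n e) v (cden e v).
Proof.
elim: e n v => [i||e IH|e IH|e IH|c IHc b IHb s IHs] n v Hv /=.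
- case: ifP => Hi; first by constructor; rewrite Hv.
  by rewrite nth_default; [constructor | rewrite Hv leqNgt Hi].
- constructor.
- econstructor; first by constructor; [apply: IH Hv | constructor].
  constructor.
- econstructor; last by apply: (IH _ (behead v)); rewrite size_behead Hv.
  by have := @evals_drop v 1; rewrite drop1 subn1 Hv; case: (n) Hv => [|n'] Hv; [|apply]; case: (v) Hv => //= *; constructor.
- econstructor; last by apply: IH; rewrite /= size_drop Hv.
  constructor.
  + case: (n) Hv => [|n'] Hv /=; first by case: (v) Hv => //= _; constructor.
    by constructor; rewrite Hv.
  + have := @evals_drop v 2; rewrite Hv /=; case: n Hv => [|[|n']] Hv.
    * by case: (v) Hv => // _ _; constructor.
    * by case: (v) Hv => [|? []] // _ _; constructor.
    * by apply.
- econstructor.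
  + constructor; first by apply: IHc Hv.
    by have := @evals_drop v 0; rewrite drop0 subn0 Hv; apply.
  + move: (cden c v) => x; elim: x => [|x IHx] /=.
    * by constructor; apply: IHb.
    * by econstructor; [apply: IHx | apply: IHs; rewrite /= Hv].
Qed.

Definition tri (w : nat) := (w * w.+1) %/ 2.

Lemma cpairE a b : cpair a b = tri (a + b) + b.
Proof. by []. Qed.

Lemma triS w : tri w.+1 = tri w + w.+1.
Proof.
rewrite /tri (_ : w.+1 * w.+2 = w.+1 * 2 + w * w.+1); last by nia.
by rewrite divnMDl // addnC.
Qed.

Lemma tri_mono w w' : w < w' -> tri w + w < tri w'.
Proof.
elim: w' => // w' IH; rewrite ltnS leq_eqVlt => /orP [/eqP -> | /IH H].
  by rewrite triS; lia.
by rewrite triS; lia.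
Qed.

Lemma cpair_inj a b a' b' : cpair a b = cpair a' b' -> a = a' /\ b = b'.
Proof.
rewrite !cpairE => E.
have Hs : a + b = a' + b'.
  case: (ltngtP (a + b) (a' + b')) => // H.
  - by have := tri_mono H; lia.
  - by have := tri_mono H; lia.
move: E; rewrite Hs => E; lia.
Qed.

Lemma cpair_geb a b : b <= cpair a b.
Proof. by rewrite cpairE leq_addl. Qed.

Lemma tri_ge w : w <= tri w.
Proof. by case: w => // w; rewrite triS leq_addl. Qed.

Lemma cpair_gea a b : a <= cpair a b.
Proof.
rewrite cpairE; apply: (leq_trans (leq_addr b a)); apply: (leq_trans (tri_ge _)); exact: leq_addr.
Qed.

Lemma cpair_gtb a b : b < cpair a.+1 b.
Proof. by rewrite cpairE addSn triS; lia. Qed.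

Lemma tri_le w w' : w <= w' -> tri w <= tri w'.
Proof.
move=> /subnKC <-; elim: (w' - w) => [|m IH]; first by rewrite addn0.
by rewrite addnS triS; apply: leq_trans IH _; apply: leq_addr.
Qed.

Lemma cpair_le a b a' b' : a <= a' -> b <= b' -> cpair a b <= cpair a' b'.
Proof. by move=> Ha Hb; rewrite !cpairE; apply: leq_add => //; apply: tri_le; apply: leq_add. Qed.

Lemma cpair_ltr a b b' : b < b' -> cpair a b < cpair a b'.
Proof.
move=> H; rewrite !cpairE; apply: (@leq_trans (tri (a + b) + b')); first by rewrite ltn_add2l.
by rewrite leq_add2r; apply: tri_le; rewrite leq_add2l ltnW.
Qed.

Fixpoint bexB (n : nat) (P : nat -> nat) : bool :=
  match n with 0 => false | i.+1 => bexB i P || (P i != 0) end.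

Lemma bexBP n P : reflect (exists2 i, i < n & P i != 0) (bexB n P).
Proof.
elim: n => [|n IH] /=; first by constructor; case.
apply: (iffP orP) => [[/IH [i Hi H] | H] | [i Hi H]].
- by exists i => //; apply: ltnW.
- by exists n.
- move: Hi; rewrite ltnS leq_eqVlt => /orP [/eqP Ei | Hi]; first by right; rewrite -Ei.
  by left; apply/IH; exists i.
Qed.

Fixpoint bminN (n : nat) (P : nat -> nat) : nat :=
  match n with 0 => 0 | i.+1 => let a := bminN i P in
    if a < i then a else if P i != 0 then i else i.+1 end.

Lemma bminN_spec P j N : P j != 0 -> (forall i, i < j -> P i = 0) -> j < N -> bminN N P = j.
Proof.
move=> Hj Hlt.
have H : forall N, bminN N P = if j < N then j else N.
  elim=> [|M IH] //=; rewrite IH.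
  case: (ltngtP j M) => [H|H|<-].
  - by rewrite H (ltn_trans H).
  - by rewrite ltnn (Hlt _ H) /= ltnS leqNgt H.
  - by rewrite ltnn Hj ltnSn.
by move=> HN; rewrite H HN.
Qed.

Definition pfst (p : nat) : nat :=
  bminN p.+1 (fun a => nat_of_bool (bexB p.+1 (fun b => nat_of_bool (cpair a b == p)))).
Definition psnd (p : nat) : nat :=
  bminN p.+1 (fun b => nat_of_bool (bexB p.+1 (fun a => nat_of_bool (cpair a b == p)))).

Lemma nbK (b : bool) : (nat_of_bool b != 0) = b.
Proof. by case: b. Qed.

Lemma pfstE a b : pfst (cpair a b) = a.
Proof.
apply: bminN_spec; last by rewrite ltnS cpair_gea.
- by rewrite nbK; apply/bexBP; exists b; rewrite ?ltnS ?cpair_geb // nbK.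
- move=> i Hi; apply/eqP; rewrite eqb0; apply/bexBP => [[b' _]]; rewrite nbK => /eqP /cpair_inj [E _].
  by move: Hi; rewrite E ltnn.
Qed.

Lemma psndE a b : psnd (cpair a b) = b.
Proof.
apply: bminN_spec; last by rewrite ltnS cpair_geb.
- by rewrite nbK; apply/bexBP; exists a; rewrite ?ltnS ?cpair_gea // nbK.
- move=> i Hi; apply/eqP; rewrite eqb0; apply/bexBP => [[a' _]]; rewrite nbK => /eqP /cpair_inj [_ E].
  by move: Hi; rewrite E ltnn.
Qed.

Definition tabN (N : nat) (f : nat -> nat) : nat := iterR N 0 (fun i a => (cpair (f i) a).+1).
Definition lkpN (T N i : nat) : nat := pfst (iterR (N - i.+1) T (fun _ a => psnd a.-1)).-1.

Lemma iterR_iter n b (f : nat -> nat) : iterR n b (fun _ a => f a) = iter n f b.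
Proof. by elim: n => //= n ->. Qed.

Lemma lkp_hist (F : nat -> nat -> nat) c c' : c' < c ->
  lkpN (iterR c 0 (fun i a => (cpair (F i a) a).+1)) c c' = F c' (iterR c' 0 (fun i a => (cpair (F i a) a).+1)).
Proof.
set H := fun j => iterR j 0 (fun i a => (cpair (F i a) a).+1).
have tlH : forall j, psnd (H j.+1).-1 = H j by move=> j; rewrite /H /= psndE.
have key : forall m, iter m (fun a => psnd a.-1) (H (c'.+1 + m)) = H c'.+1.
  by elim=> [|m IH]; rewrite ?addn0 // iterSr addnS tlH IH.
move=> Hc; rewrite /lkpN iterR_iter -(subnKC Hc) subSS addKn.
by rewrite key /H /= pfstE.
Qed.

Lemma lkp_tab N f i : i < N -> lkpN (tabN N f) N i = f i.
Proof. by move=> H; rewrite /tabN (lkp_hist (fun i _ => f i) H). Qed.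

Definition cstC m := iter m CSucc CZero.
Definition predC x := CRec x CZero (CVar 0).
Definition isnzC x := CRec x CZero (CSucc CZero).
Definition iszC x := CRec x (CSucc CZero) CZero.
Definition addC a b := CRec a b (CSucc (CVar 1)).
Definition subC a b := CRec b a (predC (CVar 1)).
Definition mulC a b := CRec a CZero (addC (CVar 1) (CWk (CWk b))).
Definition eqC a b := iszC (addC (subC a b) (subC b a)).
Definition ltC a b := isnzC (subC b a).
Definition andC a b := CRec a CZero (isnzC (CWk (CWk b))).
Definition orC a b := CRec a (isnzC b) (CSucc CZero).
Definition iteC c t e := CRec c e (CWk (CWk t)).
Definition oddC x := CRec x CZero (iszC (CVar 1)).
Definition halfC x := CRec x CZero (addC (CVar 1) (oddC (CVar 0))).
Definition pairC a b := addC (halfC (mulC (addC a b) (CSucc (addC a b)))) b.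
Definition bexC b f := CRec b CZero (orC (CVar 1) (CSh f)).
Definition bminC b f := CRec b CZero
  (iteC (ltC (CVar 1) (CVar 0)) (CVar 1) (iteC (CSh f) (CVar 0) (CSucc (CVar 0)))).
Definition fstC x := bminC (CSucc x) (bexC (CSucc (CWk x)) (eqC (pairC (CVar 1) (CVar 0)) (CWk (CWk x)))).
Definition sndC x := bminC (CSucc x) (bexC (CSucc (CWk x)) (eqC (pairC (CVar 0) (CVar 1)) (CWk (CWk x)))).
Definition tabC N f := CRec N CZero (CSucc (pairC (CSh f) (CVar 1))).
Definition lkpC T N i := fstC (predC (CRec (subC N (CSucc i)) T (sndC (predC (CVar 1))))).
Definition letC a f := CRec (CSucc CZero) a (CWk f).


Lemma cstC_den m v : cden (cstC m) v = m.
Proof. rewrite /cstC. by elim: m => //= m ->. Qed.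
Opaque cstC.
Lemma predC_den x v : cden (predC x) v = (cden x v).-1.
Proof. rewrite /predC. by rewrite /=; case: (cden x v). Qed.
Opaque predC.
Lemma isnzC_den x v : cden (isnzC x) v = nat_of_bool (cden x v != 0).
Proof. rewrite /isnzC. by rewrite /=; case: (cden x v). Qed.
Opaque isnzC.
Lemma iszC_den x v : cden (iszC x) v = nat_of_bool (cden x v == 0).
Proof. rewrite /iszC. by rewrite /=; case: (cden x v). Qed.
Opaque iszC.
Lemma addC_den a b v : cden (addC a b) v = cden a v + cden b v.
Proof. rewrite /addC. by rewrite /=; elim: (cden a v) => //= m ->. Qed.
Opaque addC.
Lemma subC_den a b v : cden (subC a b) v = cden a v - cden b v.
Proof. rewrite /subC. rewrite /=; elim: (cden b v) => [|m IH] /=; first by rewrite subn0.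
by rewrite IH subnS; case: (_ - _). Qed.
Opaque subC.
Lemma mulC_den a b v : cden (mulC a b) v = cden a v * cden b v.
Proof. rewrite /mulC. rewrite /=; elim: (cden a v) => //= m ->; rewrite addC_den /=; lia. Qed.
Opaque mulC.
Lemma eqC_den a b v : cden (eqC a b) v = nat_of_bool (cden a v == cden b v).
Proof. rewrite /eqC.
rewrite iszC_den addC_den !subC_den; congr nat_of_bool.
by apply/eqP/eqP; lia.
Qed.
Opaque eqC.
Lemma ltC_den a b v : cden (ltC a b) v = nat_of_bool (cden a v < cden b v).
Proof. rewrite /ltC. by rewrite isnzC_den subC_den subn_eq0 ltnNge. Qed.
Opaque ltC.
Lemma andC_den a b v : cden (andC a b) v = nat_of_bool ((cden a v != 0) && (cden b v != 0)).
Proof. rewrite /andC. by rewrite /=; case: (cden a v) => //= m; rewrite isnzC_den. Qed.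
Opaque andC.
Lemma orC_den a b v : cden (orC a b) v = nat_of_bool ((cden a v != 0) || (cden b v != 0)).
Proof. rewrite /orC. by rewrite /= isnzC_den; case: (cden a v). Qed.
Opaque orC.
Lemma iteC_den c t e v : cden (iteC c t e) v = if cden c v != 0 then cden t v else cden e v.
Proof. rewrite /iteC. by rewrite /=; case: (cden c v). Qed.
Opaque iteC.
Lemma oddC_den x v : cden (oddC x) v = odd (cden x v).
Proof. rewrite /oddC. by rewrite /=; elim: (cden x v) => //= m ->; case: (odd m). Qed.
Opaque oddC.
Lemma halfC_den x v : cden (halfC x) v = (cden x v)./2.
Proof. rewrite /halfC.
rewrite /=; elim: (cden x v) => //= m ->.
by rewrite addC_den /= oddC_den /= uphalf_half addnC.
Qed.
Opaque halfC.
Lemma pairC_den a b v : cden (pairC a b) v = cpair (cden a v) (cden b v).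
Proof. rewrite /pairC. by rewrite addC_den halfC_den mulC_den /= addC_den /cpair divn2. Qed.
Opaque pairC.
Lemma bexC_den b f v : cden (bexC b f) v = nat_of_bool (bexB (cden b v) (fun i => cden f (i :: v))).
Proof. rewrite /bexC /=; elim: (cden b v) => [|m IH] //=.
by rewrite orC_den /= drop0 IH nbK.
Qed.
Opaque bexC.
Lemma bminC_den b f v : cden (bminC b f) v = bminN (cden b v) (fun i => cden f (i :: v)).
Proof. rewrite /bminC /=; elim: (cden b v) => [|m IH] //=.
by rewrite iteC_den ltC_den nbK /= iteC_den /= drop0 IH.
Qed.
Opaque bminC.
Lemma fstC_den x v : cden (fstC x) v = pfst (cden x v).
Proof.
rewrite /fstC bminC_den /pfst; apply: congr2 => //; apply: functional_extensionality => a.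
rewrite bexC_den; apply: congr1; apply: congr2 => //; apply: functional_extensionality => b.
by rewrite eqC_den pairC_den.
Qed.
Opaque fstC.
Lemma sndC_den x v : cden (sndC x) v = psnd (cden x v).
Proof.
rewrite /sndC bminC_den /psnd; apply: congr2 => //; apply: functional_extensionality => a.
rewrite bexC_den; apply: congr1; apply: congr2 => //; apply: functional_extensionality => b.
by rewrite eqC_den pairC_den.
Qed.
Opaque sndC.
Lemma tabC_den N f v : cden (tabC N f) v = tabN (cden N v) (fun i => cden f (i :: v)).
Proof. rewrite /tabC /= /tabN; elim: (cden N v) => [|m IH] //=; by rewrite pairC_den /= drop0 IH. Qed.
Opaque tabC.
Lemma lkpC_den T N i v : cden (lkpC T N i) v = lkpN (cden T v) (cden N v) (cden i v).
Proof.
rewrite /lkpC fstC_den predC_den /= subC_den /= /lkpN; congr (pfst (_.-1)).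
elim: (_ - _) => [|m IH] //=; by rewrite sndC_den predC_den /= IH.
Qed.
Opaque lkpC.
Lemma letC_den a f v : cden (letC a f) v = cden f (cden a v :: v).
Proof. by []. Qed.
Opaque letC.

Inductive hexp :=
| HVar of nat | HCst of nat | HSuc of hexp | HPrd of hexp
| HPr of hexp & hexp | HP1 of hexp | HP2 of hexp
| HEqb of hexp & hexp | HLtb of hexp & hexp | HAnd of hexp & hexp | HOr of hexp & hexp
| HNot of hexp | HIte of hexp & hexp & hexp
| HBex of hexp & hexp | HTab of hexp & hexp | HLkp of hexp & hexp & hexp
| HRec of hexp & hexp & hexp | HLet of hexp & hexp.

Fixpoint hden (e : hexp) (v : seq nat) : nat :=
  match e with
  | HVar i => nth 0 v i
  | HCst m => m
  | HSuc a => (hden a v).+1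
  | HPrd a => (hden a v).-1
  | HPr a b => cpair (hden a v) (hden b v)
  | HP1 a => pfst (hden a v)
  | HP2 a => psnd (hden a v)
  | HEqb a b => nat_of_bool (hden a v == hden b v)
  | HLtb a b => nat_of_bool (hden a v < hden b v)
  | HAnd a b => nat_of_bool ((hden a v != 0) && (hden b v != 0))
  | HOr a b => nat_of_bool ((hden a v != 0) || (hden b v != 0))
  | HNot a => nat_of_bool (hden a v == 0)
  | HIte c t e => if hden c v != 0 then hden t v else hden e v
  | HBex b f => nat_of_bool (bexB (hden b v) (fun i => hden f (i :: v)))
  | HTab n f => tabN (hden n v) (fun i => hden f (i :: v))
  | HLkp t n i => lkpN (hden t v) (hden n v) (hden i v)
  | HRec c b s => iterR (hden c v) (hden b v) (fun i a => hden s (i :: a :: v))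
  | HLet a f => hden f (hden a v :: v)
  end.

Fixpoint tr (e : hexp) : cexp :=
  match e with
  | HVar i => CVar i
  | HCst m => cstC m
  | HSuc a => CSucc (tr a)
  | HPrd a => predC (tr a)
  | HPr a b => pairC (tr a) (tr b)
  | HP1 a => fstC (tr a)
  | HP2 a => sndC (tr a)
  | HEqb a b => eqC (tr a) (tr b)
  | HLtb a b => ltC (tr a) (tr b)
  | HAnd a b => andC (tr a) (tr b)
  | HOr a b => orC (tr a) (tr b)
  | HNot a => iszC (tr a)
  | HIte c t e => iteC (tr c) (tr t) (tr e)
  | HBex b f => bexC (tr b) (tr f)
  | HTab n f => tabC (tr n) (tr f)
  | HLkp t n i => lkpC (tr t) (tr n) (tr i)
  | HRec c b s => CRec (tr c) (tr b) (tr s)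
  | HLet a f => letC (tr a) (tr f)
  end.

Lemma tr_ok e : cden (tr e) = hden e.
Proof.
elim: e => [i|m|a IH|a IH|a IHa b IHb|a IH|a IH|a IHa b IHb|a IHa b IHb|a IHa b IHb|a IHa b IHb
  |a IH|c IHc t IHt f IHf|b IHb f IHf|b IHb f IHf|a IHa b IHb c IHc|a IHa b IHb c IHc|a IHa b IHb];
  apply: functional_extensionality => v /=.
all: rewrite ?lkpC_den ?cstC_den ?predC_den ?pairC_den ?fstC_den ?sndC_den ?eqC_den ?ltC_den ?andC_den
  ?orC_den ?iszC_den ?iteC_den ?bexC_den ?tabC_den ?lkpC_den ?letC_den /=; 
  rewrite ?IH ?IHa ?IHb ?IHc ?IHt ?IHf //.
Qed.

Theorem hden_computable e n v : size v = n -> eval (cmp n (tr e)) v (hden e v).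
Proof. by move=> H; rewrite -tr_ok; apply: cmp_ok. Qed.

Record Ops (T : Type) := mkOps {
  ocst : nat -> T; osuc : T -> T; oprd : T -> T; opr : T -> T -> T; op1 : T -> T; op2 : T -> T;
  oeq : T -> T -> T; olt : T -> T -> T; oand : T -> T -> T; oor : T -> T -> T; onot : T -> T;
  oite : T -> T -> T -> T; obex : T -> (T -> T) -> T; otab : T -> (T -> T) -> T;
  olkp : T -> T -> T -> T; orec : T -> T -> (T -> T -> T) -> T; olet : T -> (T -> T) -> T }.

Definition natOps : Ops nat := mkOps (fun m => m) succn predn cpair pfst psnd
  (fun a b => nat_of_bool (a == b)) (fun a b => nat_of_bool (a < b))
  (fun a b => nat_of_bool ((a != 0) && (b != 0))) (fun a b => nat_of_bool ((a != 0) || (b != 0)))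
  (fun a => nat_of_bool (a == 0)) (fun c t e => if c != 0 then t else e)
  (fun b f => nat_of_bool (bexB b f)) tabN lkpN iterR (fun a f => f a).

Definition hx := nat -> hexp.
Definition lv (l : nat) : hx := fun d => HVar (d - l.+1).
Definition synOps : Ops hx := mkOps (fun m _ => HCst m) (fun a d => HSuc (a d)) (fun a d => HPrd (a d))
  (fun a b d => HPr (a d) (b d)) (fun a d => HP1 (a d)) (fun a d => HP2 (a d))
  (fun a b d => HEqb (a d) (b d)) (fun a b d => HLtb (a d) (b d))
  (fun a b d => HAnd (a d) (b d)) (fun a b d => HOr (a d) (b d)) (fun a d => HNot (a d))
  (fun c t e d => HIte (c d) (t d) (e d))
  (fun b f d => HBex (b d) (f (lv d) d.+1)) (fun b f d => HTab (b d) (f (lv d) d.+1))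
  (fun t b i d => HLkp (t d) (b d) (i d))
  (fun c b s d => HRec (c d) (b d) (s (lv d.+1) (lv d) d.+2))
  (fun a f d => HLet (a d) (f (lv d) d.+1)).

Record prm (T : Type) := Prm { pd : T; pIC : T; pRL : T; pML : T; pNM : T; pSX : T; pSY : T }.

Section Gen0.
Variables (T : Type) (O : Ops T).
Local Notation C := (ocst O). Local Notation SUC := (osuc O). Local Notation PRD := (oprd O).
Local Notation PR := (opr O). Local Notation P1 := (op1 O). Local Notation P2 := (op2 O).
Local Notation EQ := (oeq O). Local Notation LT := (olt O). Local Notation AND := (oand O).
Local Notation OR := (oor O). Local Notation NOT := (onot O). Local Notation ITE := (oite O).
Local Notation BEX := (obex O). Local Notation TAB := (otab O). Local Notation LKP := (olkp O).
Local Notation REC := (orec O). Local Notation LET := (olet O).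
Definition IMP a b := OR (NOT a) b.
Definition BALL b f := NOT (BEX b (fun i => NOT (f i))).
Definition CONS a l := SUC (PR a l).
Definition HD l := P1 (PRD l).
Definition TL l := P2 (PRD l).
Definition BND v L := REC L (C 0) (fun _ acc => CONS v acc).
End Gen0.

Section Gen1.
Variables (T : Type) (O : Ops T) (n k pR : nat) (p : prm T).
Local Notation C := (ocst O). Local Notation SUC := (osuc O). Local Notation PRD := (oprd O).
Local Notation PR := (opr O). Local Notation P1 := (op1 O). Local Notation P2 := (op2 O).
Local Notation EQ := (oeq O). Local Notation LT := (olt O). Local Notation AND := (oand O).
Local Notation OR := (oor O). Local Notation NOT := (onot O). Local Notation ITE := (oite O).
Local Notation BEX := (obex O). Local Notation TAB := (otab O). Local Notation LKP := (olkp O).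
Local Notation REC := (orec O). Local Notation LET := (olet O).
Local Notation IMP := (IMP O). Local Notation BALL := (BALL O).
Local Notation d := (pd p).

Definition DD := PR d d.
Definition SS := PR DD DD.
Definition GETZ z s := ITE (EQ z (C 0)) (P1 s) (P2 s).
Definition GETO z s := ITE (EQ z (C 0)) (P2 s) (P1 s).
Definition BEXS P := BEX d (fun a => BEX d (fun b => P (PR a b))).
Definition BALLS P := BALL d (fun a => BALL d (fun b => P (PR a b))).
Definition VALID s := AND (LT (P1 s) d) (LT (P2 s) d).
Definition ICV j := LKP (pIC p) (C n) j.
Definition RREL a b := LKP (pRL p) DD (PR a b).
Definition TVAL s t := ITE (EQ (P1 t) (C 0)) (ICV (P2 t)) (GETZ (P2 t) s).
Definition DL a := REC (C k) (TAB d (fun x => EQ x a)) (fun _ acc =>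
  TAB d (fun x => OR (LKP acc d x) (BEX d (fun u => AND (LKP acc d u) (OR (RREL u x) (RREL x u)))))).
Definition NEAR s := LKP (DL (P2 s)) d (P1 s).
Definition RZ z s s' := AND (RREL (GETZ z s) (GETZ z s')) (EQ (GETO z s) (GETO z s')).
Definition MEM Sig s := LKP Sig DD s.
Definition SIM fl z s s' := ITE fl (EQ (GETZ z s) (GETZ z s'))
  (LKP (ITE (EQ z (C 0)) (pSX p) (pSY p)) SS (PR s s')).
Definition RESTR Sig fl s s0 := AND (MEM Sig s0) (OR (SIM fl (C 0) s s0) (SIM fl (C 1) s s0)).
Definition NEWSIG Sig fl z s s2 := ITE (NEAR s2) (TAB DD (fun t => EQ t s2))
  (TAB DD (fun t => AND (VALID t) (AND (NOT (NEAR t))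
     (BEXS (fun s0 => AND (RESTR Sig fl s s0) (RZ z s0 t)))))).
Definition KEY tc s := P2 (REC tc (PR tc (C 0)) (fun _ st => ITE (EQ (P1 st) (C 0)) st
   (PR (TL O (P1 st)) (CONS O (TVAL s (HD O (P1 st))) (P2 st))))).
Definition ATOM pc tc s := ITE (EQ pc (C pR)) (RREL (TVAL s (HD O tc)) (TVAL s (HD O (TL O tc))))
  (LKP (pML p) (pNM p) (PR pc (KEY tc s))).
Definition GC K c h ctx :=
  LET (P1 ctx) (fun Sig => LET (P1 (P2 ctx)) (fun fl => LET (P2 (P2 ctx)) (fun s =>
  LET (P1 c) (fun tag => LET (P2 c) (fun r =>
  let TR g ctx' := LKP (LKP h c g) K ctx' in
  ITE (EQ tag (C 0)) (ATOM (P1 r) (P2 r) s)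
  (ITE (EQ tag (C 1)) (EQ (TVAL s (P1 r)) (TVAL s (P2 r)))
  (ITE (EQ tag (C 2)) (NOT (TR r ctx))
  (ITE (EQ tag (C 3)) (AND (TR (P1 r) ctx) (TR (P2 r) ctx))
  (ITE (EQ tag (C 4)) (BALLS (fun s2 => IMP (RZ (P1 r) s s2)
        (TR (P2 r) (PR (NEWSIG Sig fl (P1 r) s s2) (PR (C 1) s2)))))
  (ITE (EQ tag (C 5)) (BALLS (fun s1 => BALLS (fun s2 => IMP (MEM Sig s1) (IMP (MEM Sig s2)
        (IMP (SIM fl (P1 r) s s1) (IMP (SIM fl (P1 r) s s2)
        (EQ (TVAL s1 (P2 r)) (TVAL s2 (P2 r)))))))))
  (BALLS (fun s' => IMP (MEM Sig s') (IMP (SIM fl (P1 r) s s')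
        (TR (P2 r) (PR Sig (PR fl s')))))))))))))))).
Definition HIST K c := REC c (C 0) (fun i acc => CONS O (TAB K (fun ctx => GC K i acc ctx)) acc).
Definition VT K c := TAB K (fun ctx => GC K c (HIST K c) ctx).
Definition ICOK := AND (BALL (C n) (fun j => LT (ICV j) d))
                       (BALL d (fun a => BEX (C n) (fun j => EQ (ICV j) a))).
Definition SERIAL := BALL d (fun a => BEX d (fun b => RREL a b)).
Definition SREFL Sig z := BALLS (fun s => IMP (MEM Sig s) (SIM (C 0) z s s)).
Definition SSYM Sig z := BALLS (fun s => BALLS (fun t => IMP (MEM Sig s) (IMP (MEM Sig t)
   (IMP (SIM (C 0) z s t) (SIM (C 0) z t s))))).
Definition STRANS Sig z := BALLS (fun s => BALLS (fun t => BALLS (fun u =>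
   IMP (MEM Sig s) (IMP (MEM Sig t) (IMP (MEM Sig u)
   (IMP (SIM (C 0) z s t) (IMP (SIM (C 0) z t u) (SIM (C 0) z s u)))))))).
Definition SEQV Sig z := AND (SREFL Sig z) (AND (SSYM Sig z) (STRANS Sig z)).
Definition SIMOK Sig := AND (SEQV Sig (C 0)) (SEQV Sig (C 1)).
Definition KS1 Sig z z' := BALLS (fun s => BALLS (fun s' => IMP (MEM Sig s) (IMP (MEM Sig s')
   (IMP (SIM (C 0) z s s') (IMP (LKP (DL (GETZ z s)) d (GETZ z' s))
   (EQ (GETZ z' s) (GETZ z' s'))))))).
Definition KSIGHT Sig := AND (AND (KS1 Sig (C 0) (C 0)) (KS1 Sig (C 0) (C 1)))
                             (AND (KS1 Sig (C 1) (C 0)) (KS1 Sig (C 1) (C 1))).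
End Gen1.

Section Gen2.
Variables (T : Type) (O : Ops T) (n k pR : nat).
Local Notation C := (ocst O). Local Notation SUC := (osuc O).
Local Notation PR := (opr O). Local Notation LT := (olt O). Local Notation AND := (oand O).
Local Notation BEX := (obex O). Local Notation LKP := (olkp O). Local Notation LET := (olet O).
Definition DEC code :=
  BEX (SUC (C n)) (fun d => AND (LT (C 0) d) (
  BEX (SUC (BND O (C n) (C n))) (fun ICL =>
  BEX (SUC (BND O (C 1) (PR d d))) (fun RL =>
  LET (SUC (PR code (BND O (C n) code))) (fun NM =>
  BEX (SUC (BND O (C 1) NM)) (fun ML =>
  BEX (SUC (BND O (C 1) (PR (PR d d) (PR d d)))) (fun SX =>
  BEX (SUC (BND O (C 1) (PR (PR d d) (PR d d)))) (fun SY =>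
  let p := Prm d ICL RL ML NM SX SY in
  AND (ICOK O n p) (AND (SERIAL O p) (
  LET (BND O (C 1) (PR d d)) (fun BS =>
  LET (SUC (PR BS (PR (C 1) (PR d d)))) (fun K =>
  BEX (SUC BS) (fun Sig0 => AND (SIMOK O p Sig0) (AND (KSIGHT O k p Sig0)
    (BEXS O p (fun s => AND (MEM O p Sig0 s)
       (LKP (VT O n k pR p K code) K (PR Sig0 (PR (C 0) s))))))))))))))))))).
End Gen2.

Lemma bridge n k pR code :
  hden (DEC synOps n k pR (lv 0) 1) [:: code] = DEC natOps n k pR code.
Proof.
cbv beta iota zeta delta [DEC GC HIST VT IMP BALL CONS HD TL BND DD SS GETZ GETO BEXS BALLS VALID
  ICV RREL TVAL DL NEAR RZ MEM SIM RESTR NEWSIG KEY ATOM ICOK SERIAL SREFL SSYM STRANS SEQV SIMOK KS1 KSIGHT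
  hden synOps natOps lv nth subn minus ocst osuc oprd opr op1 op2 oeq olt oand oor onot oite obex otab olkp orec olet pd pIC pRL pML pNM pSX pSY].
reflexivity. Qed.

Arguments GETZ : simpl never.
Arguments GETO : simpl never.
Arguments TVAL : simpl never.
Arguments ICV : simpl never.
Arguments RREL : simpl never.
Arguments DL : simpl never.
Arguments NEAR : simpl never.
Arguments RZ : simpl never.
Arguments MEM : simpl never.
Arguments SIM : simpl never.
Arguments RESTR : simpl never.
Arguments NEWSIG : simpl never.
Arguments KEY : simpl never.
Arguments ATOM : simpl never.
Arguments GC : simpl never.
Arguments HIST : simpl never.
Arguments VT : simpl never.
Arguments BALLS : simpl never.
Arguments BEXS : simpl never.
Arguments VALID : simpl never.
Arguments DD : simpl never.
Arguments SS : simpl never.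
Arguments IMP : simpl never.
Arguments BALL : simpl never.
Arguments CONS : simpl never.
Arguments HD : simpl never.
Arguments TL : simpl never.
Arguments BND : simpl never.
Arguments ICOK : simpl never.
Arguments SERIAL : simpl never.
Arguments SREFL : simpl never.
Arguments SSYM : simpl never.
Arguments STRANS : simpl never.
Arguments SEQV : simpl never.
Arguments SIMOK : simpl never.
Arguments KS1 : simpl never.
Arguments KSIGHT : simpl never.
Arguments DEC : simpl never.

Lemma IMP_E a b : (IMP natOps a b != 0) = (a != 0) ==> (b != 0).
Proof. by rewrite /IMP /= !nbK; case: (a == 0). Qed.
Lemma AND_E a b : (oand natOps a b != 0) = (a != 0) && (b != 0).
Proof. by rewrite /= nbK. Qed.
Lemma OR_E a b : (oor natOps a b != 0) = (a != 0) || (b != 0).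
Proof. by rewrite /= nbK. Qed.
Lemma NOT_E a : (onot natOps a != 0) = (a == 0).
Proof. by rewrite /= nbK. Qed.
Lemma EQ_E a b : (oeq natOps a b != 0) = (a == b).
Proof. by rewrite /= nbK. Qed.
Lemma LT_E a b : (olt natOps a b != 0) = (a < b).
Proof. by rewrite /= nbK. Qed.
Lemma BEX_P b f : reflect (exists2 i, i < b & f i != 0) (obex natOps b f != 0).
Proof. by rewrite /= nbK; apply: bexBP. Qed.
Lemma BALL_P b f : reflect (forall i, i < b -> f i != 0) (BALL natOps b f != 0).
Proof.
rewrite /BALL NOT_E /= eqb0; apply: (iffP negP) => [H i Hi | H].
- by apply/negP => /eqP E; apply: H; apply/bexBP; exists i => //; rewrite E.
- by move=> /bexBP [i Hi]; rewrite nbK => /eqP; apply/eqP/H.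
Qed.
Lemma ITE_E c t e : oite natOps c t e = if c != 0 then t else e.
Proof. by []. Qed.
Lemma GETZ_E z s : GETZ natOps z s = if z == 0 then pfst s else psnd s.
Proof. by rewrite /GETZ /= nbK. Qed.
Lemma GETO_E z s : GETO natOps z s = if z == 0 then psnd s else pfst s.
Proof. by rewrite /GETO /= nbK. Qed.

Lemma nb_le1 (b : bool) : nat_of_bool b <= 1.
Proof. by case: b. Qed.

Lemma BND_E v L : BND natOps v L = iterR L 0 (fun _ a => (cpair v a).+1).
Proof. by []. Qed.

Lemma tab_bnd L f v : (forall i, i < L -> f i <= v) -> tabN L f <= BND natOps v L.
Proof.
rewrite BND_E /tabN; elim: L => //= L IH H; rewrite ltnS; apply: cpair_le.
- by apply: H.
- by apply: IH => i Hi; apply: H; apply: ltnW.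
Qed.

Fixpoint encL (l : seq nat) : nat := if l is a :: l' then (cpair a (encL l')).+1 else 0.

Lemma encL_inj : injective encL.
Proof.
elim=> [|a l IH] [|b l'] //= [] /cpair_inj [-> E].
by rewrite (IH _ E).
Qed.

Lemma encL_size l : size l <= encL l.
Proof. elim: l => //= a l IH; rewrite ltnS; apply: leq_trans IH (cpair_geb _ _). Qed.

Lemma encL_bnd l v L : size l <= L -> all (fun x => x <= v) l -> encL l <= BND natOps v L.
Proof.
rewrite BND_E; elim: l L => [|a l IH] [|L] //= Hs /andP [Ha Hl].
by rewrite ltnS; apply: cpair_le => //; apply: IH.
Qed.

Lemma encts_encL (Cons : finType) (ts : seq (term Cons)) : encts ts = encL (map (@enct _) ts).
Proof. by elim: ts => //= t ts ->. Qed.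

Lemma iter_fix (f : nat -> nat) x m : f x = x -> iter m f x = x.
Proof. by move=> H; elim: m => //= m ->. Qed.

Lemma KEY_E n p (tv : nat -> nat) tc s (l : seq nat) :
  (forall t, TVAL natOps n p s t = tv t) -> tc = encL l ->
  KEY natOps n p tc s = encL (rev (map tv l)).
Proof.
move=> Htv ->; rewrite /KEY /= iterR_iter.
set f := fun st => _.
have key : forall l acc m, size l <= m ->
   iter m f (cpair (encL l) (encL acc)) = cpair 0 (encL (rev (map tv l) ++ acc)).
  elim=> [|a l' IH] acc m Hm /=.
  - by apply: iter_fix; rewrite /f pfstE /=.
  - case: m Hm => // m Hm; rewrite iterSr.
    have -> : f (cpair (encL (a :: l')) (encL acc)) = cpair (encL l') (encL (tv a :: acc)).
      by rewrite /f pfstE /= /TL /HD /= !pfstE !psndE Htv.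
    by rewrite IH // rev_cons cat_rcons.
by rewrite (key l [::] (encL l) (encL_size l)) psndE cats0.
Qed.

Fixpoint occ (Pred : eqType) (Cons : Type) (P : Pred) (f : form Pred Cons) : bool :=
  match f with
  | FAtom Q _ => Q == P
  | FEq _ _ | FKt _ _ => false
  | FNeg g | FBox _ g | FK _ g => occ P g
  | FAnd g h => occ P g || occ P h
  end.

Arguments pfst : simpl never.
Arguments psnd : simpl never.
Arguments cpair : simpl never.
Arguments lkpN : simpl never.
Arguments tabN : simpl never.

Section GCL.
Variables (n k pR : nat) (p : prm nat) (K : nat) (h Sig fl s r : nat).
Local Notation ctx := (cpair Sig (cpair fl s)).
Local Notation TR c g x := (lkpN (lkpN h c g) K x).
Lemma GC0 : GC natOps n k pR p K (cpair 0 r) h ctx = ATOM natOps n pR p (pfst r) (psnd r) s.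
Proof. by rewrite /GC /= !pfstE !psndE !pfstE /=. Qed.
Lemma GC1 : GC natOps n k pR p K (cpair 1 r) h ctx = oeq natOps (TVAL natOps n p s (pfst r)) (TVAL natOps n p s (psnd r)).
Proof. by rewrite /GC /= !pfstE !psndE !pfstE /=. Qed.
Lemma GC2 : GC natOps n k pR p K (cpair 2 r) h ctx = onot natOps (TR (cpair 2 r) r ctx).
Proof. by rewrite /GC /= !pfstE !psndE !pfstE /=. Qed.
Lemma GC3 : GC natOps n k pR p K (cpair 3 r) h ctx = oand natOps (TR (cpair 3 r) (pfst r) ctx) (TR (cpair 3 r) (psnd r) ctx).
Proof. by rewrite /GC /= !pfstE !psndE !pfstE /=. Qed.
Lemma GC4 : GC natOps n k pR p K (cpair 4 r) h ctx = BALLS natOps p (fun s2 => IMP natOps (RZ natOps p (pfst r) s s2)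
   (TR (cpair 4 r) (psnd r) (cpair (NEWSIG natOps k p Sig fl (pfst r) s s2) (cpair 1 s2)))).
Proof. by rewrite /GC /= !pfstE !psndE !pfstE /=. Qed.
Lemma GC5 : GC natOps n k pR p K (cpair 5 r) h ctx = BALLS natOps p (fun s1 => BALLS natOps p (fun s2 =>
  IMP natOps (MEM natOps p Sig s1) (IMP natOps (MEM natOps p Sig s2) (IMP natOps (SIM natOps p fl (pfst r) s s1)
  (IMP natOps (SIM natOps p fl (pfst r) s s2) (oeq natOps (TVAL natOps n p s1 (psnd r)) (TVAL natOps n p s2 (psnd r)))))))).
Proof. by rewrite /GC /= !pfstE !psndE !pfstE /=. Qed.
Lemma GC6 : GC natOps n k pR p K (cpair 6 r) h ctx = BALLS natOps p (fun s' => IMP natOps (MEM natOps p Sig s')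
  (IMP natOps (SIM natOps p fl (pfst r) s s') (TR (cpair 6 r) (psnd r) (cpair Sig (cpair fl s'))))).
Proof. by rewrite /GC /= !pfstE !psndE !pfstE /=. Qed.
End GCL.

Section Main.
Variables (k : nat) (Pred : countType) (arity : Pred -> nat) (R : Pred) (Cons : finType).
Hypothesis HarR : arity R = 2.
Local Notation n := #|Cons|.
Local Notation pR := (pickle R).
Variables (D : finType) (I : Pred -> pred (seq D)) (Ic : Cons -> D) (p : prm nat) (e : D -> nat).
Local Notation d := (pd p).
Hypotheses (e_inj : injective e) (e_lt : forall x, e x < d)
  (e_surj : forall a, a < d -> exists x, e x = a).
Hypothesis HIC : forall c, lkpN (pIC p) n (enum_rank c) = e (Ic c).
Hypothesis HRL : forall a b, (lkpN (pRL p) (cpair d d) (cpair (e a) (e b)) != 0) = Rrel R I a b.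

Definition es (s : D * D) := cpair (e s.1) (e s.2).

Lemma es_lt s : es s < cpair d d.
Proof.
rewrite /es; apply: (@leq_trans (cpair (e s.1) d)); first exact: cpair_ltr.
by apply: cpair_le => //; apply: ltnW.
Qed.

Lemma es_inj : injective es.
Proof. by move=> [a b] [a' b'] /cpair_inj [/e_inj /= -> /e_inj ->]. Qed.

Lemma es_eq s s' : (es s == es s') = (s == s').
Proof. by apply/eqP/eqP => [/es_inj|->]. Qed.

Lemma e_eq x y : (e x == e y) = (x == y).
Proof. by apply/eqP/eqP => [/e_inj|->]. Qed.

Lemma BALLS_P (P : nat -> nat) : reflect (forall s : D * D, P (es s) != 0) (BALLS natOps p P != 0).
Proof.
rewrite /BALLS; apply: (iffP (BALL_P _ _)) => [H [x y] | H a Ha].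
- by have /BALL_P := H _ (e_lt x); apply; apply: e_lt.
- apply/BALL_P => b Hb; have [x <-] := e_surj Ha; have [y <-] := e_surj Hb.
  by have := H (x, y).
Qed.

Lemma BEXS_P (P : nat -> nat) : reflect (exists s : D * D, P (es s) != 0) (BEXS natOps p P != 0).
Proof.
rewrite /BEXS; apply: (iffP (BEX_P _ _)) => [[a Ha /BEX_P [b Hb H]] | [[x y] H]].
- have [x Ex] := e_surj Ha; have [y Ey] := e_surj Hb.
  by exists (x, y); rewrite /es /= Ex Ey.
- by exists (e x) => //; apply/BEX_P; exists (e y).
Qed.

Lemma BALL_D (P : nat -> nat) : reflect (forall x : D, P (e x) != 0) (BALL natOps d P != 0).
Proof.
apply: (iffP (BALL_P _ _)) => [H x | H a Ha]; first exact: H.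
by have [x <-] := e_surj Ha.
Qed.

Lemma BEX_D (P : nat -> nat) : reflect (exists x : D, P (e x) != 0) (obex natOps d P != 0).
Proof.
apply: (iffP (BEX_P _ _)) => [[a Ha H] | [x H]]; last by exists (e x).
by have [x Ex] := e_surj Ha; exists x; rewrite Ex.
Qed.

Lemma GETZ_es z s : GETZ natOps (var_code z) (es s) = e (get s z).
Proof. by rewrite GETZ_E; case: z; rewrite /= ?pfstE ?psndE. Qed.

Lemma GETO_es z s : GETO natOps (var_code z) (es s) = e (get s (other z)).
Proof. by rewrite GETO_E; case: z; rewrite /= ?pfstE ?psndE. Qed.

Lemma TVAL_es s t : TVAL natOps n p (es s) (enct t) = e (Defs.tval Ic s t).
Proof.
rewrite /TVAL /ICV ITE_E EQ_E; case: t => [c|z] /=.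
- by rewrite pfstE psndE /= HIC.
- by rewrite pfstE psndE /= -GETZ_es.
Qed.

Lemma RREL_e a b : (RREL natOps p (e a) (e b) != 0) = Rrel R I a b.
Proof. by rewrite /RREL /DD /= HRL. Qed.

Lemma DL_e m a x : (lkpN (iterR m (tabN d (fun x => oeq natOps x (e a)))
   (fun _ acc => tabN d (fun x => oor natOps (lkpN acc d x) (obex natOps d (fun u =>
      oand natOps (lkpN acc d u) (oor natOps (RREL natOps p u x) (RREL natOps p x u))))))) d (e x) != 0)
  = (x \in Dk R I m a).
Proof.
elim: m x => [|m IH] x /=.
- by rewrite lkp_tab // nbK in_set1 e_eq.
- rewrite lkp_tab // nbK in_setU IH; congr orb; rewrite in_set.
  apply/idP/existsP => [/BEX_D [u] | [u]].
  + by rewrite AND_E OR_E !RREL_e IH => /andP [H1 H2]; exists u; rewrite H1 H2.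
  + by move=> /andP [H1 H2]; apply/BEX_D; exists u; rewrite AND_E OR_E !RREL_e IH H1 H2.
Qed.

Lemma DL_es m a x : (lkpN (DL natOps m p (e a)) d (e x) != 0) = (x \in Dk R I m a).
Proof. by rewrite -DL_e. Qed.

Lemma NEAR_es s : (NEAR natOps k p (es s) != 0) = near k R I s.
Proof. by rewrite /NEAR /= pfstE psndE DL_es. Qed.

Lemma RZ_es z s s' : (RZ natOps p (var_code z) (es s) (es s') != 0) = Rz R I z s s'.
Proof. by rewrite /RZ AND_E !GETZ_es !GETO_es RREL_e EQ_E e_eq. Qed.

Lemma VALID_es s : VALID natOps p (es s) != 0.
Proof. by rewrite /VALID AND_E !LT_E /es /= pfstE psndE !e_lt. Qed.

Lemma MEM_tab f s : MEM natOps p (tabN (cpair d d) f) (es s) = f (es s).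
Proof. by rewrite /MEM /DD /= lkp_tab // es_lt. Qed.


Lemma SIM1_es w a b : newsim w a b = (SIM natOps p 1 (var_code w) (es a) (es b) != 0).
Proof. by rewrite /SIM ITE_E /= EQ_E !GETZ_es e_eq. Qed.

Lemma RESTR_es SigC fl (Sig : {set D * D}) (sim : Var -> rel (D * D)) s s0 :
  (forall s, (s \in Sig) = (MEM natOps p SigC (es s) != 0)) ->
  (forall z s s', sim z s s' = (SIM natOps p fl (var_code z) (es s) (es s') != 0)) ->
  (RESTR natOps p SigC fl (es s) (es s0) != 0) = (s0 \in restr Sig sim s).
Proof.
move=> HS Hsim; rewrite /RESTR AND_E OR_E /restr inE HS; congr andb.
rewrite (_ : 0 = var_code vx) // (_ : 1 = var_code vy) // -!Hsim.
by apply/orP/existsP => [[H|H] | [[] H]]; [exists true | exists false | left | right].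
Qed.

Lemma NEWSIG_es SigC fl (Sig : {set D * D}) (sim : Var -> rel (D * D)) z s s2 t :
  (forall s, (s \in Sig) = (MEM natOps p SigC (es s) != 0)) ->
  (forall z s s', sim z s s' = (SIM natOps p fl (var_code z) (es s) (es s') != 0)) ->
  (t \in newSigma k R I Sig sim z s s2) =
  (MEM natOps p (NEWSIG natOps k p SigC fl (var_code z) (es s) (es s2)) (es t) != 0).
Proof.
move=> HS Hsim; rewrite /newSigma /NEWSIG ITE_E NEAR_es.
case: (near k R I s2); rewrite /DD /= MEM_tab.
- by rewrite EQ_E es_eq in_set1.
- rewrite AND_E VALID_es AND_E NOT_E -(negbK (_ == 0)) NEAR_es /= !inE andbC; congr andb.
  apply/existsP/BEXS_P => [[s0 /andP [H1 H2]] | [s0]].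
  + by exists s0; rewrite nbK RZ_es H2 (RESTR_es _ _ HS Hsim) H1.
  + by rewrite nbK RZ_es (RESTR_es _ _ HS Hsim) => /andP [H1 H2]; exists s0; rewrite H1.
Qed.

Lemma NEWSIG_bnd SigC fl z s s2 :
  NEWSIG natOps k p SigC fl z s s2 <= BND natOps 1 (cpair d d).
Proof. by rewrite /NEWSIG ITE_E /DD /=; case: ifP => _; apply: tab_bnd => i _; apply: nb_le1. Qed.

Lemma ATOM_es (P : Pred) (ts : seq (term Cons)) s :
  size ts = arity P ->
  (pickle P != pR -> I P [seq Defs.tval Ic s t | t <- ts] =
     (lkpN (pML p) (pNM p) (cpair (pickle P) (encL (rev (map e [seq Defs.tval Ic s t | t <- ts])))) != 0)) ->
  (ATOM natOps n pR p (pickle P) (encts ts) (es s) != 0) = I P [seq Defs.tval Ic s t | t <- ts].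
Proof.
move=> Hsz HP; rewrite /ATOM ITE_E EQ_E.
case: (eqVneq (pickle P) pR) => [E | NE].
- have EP : P = R by apply: (pcan_inj pickleK).
  move: Hsz HP; rewrite EP HarR; case: ts => [|t1 [|t2 []]] //= _ _.
  by rewrite /HD /TL /= !pfstE !psndE !pfstE !TVAL_es RREL_e.
- rewrite HP //=; congr (_ != 0); congr (lkpN _ _ (cpair _ _)).
  rewrite (@KEY_E n p (TVAL natOps n p (es s)) _ _ (map (@enct _) ts)) //; last by rewrite encts_encL.
  by rewrite -map_comp -map_comp; congr (encL (rev _)); apply: eq_map => t /=; rewrite TVAL_es.
Qed.

Definition BSd := BND natOps 1 (cpair d d).
Definition Kd := (cpair BSd (cpair 1 (cpair d d))).+1.

Lemma ctx_lt SigC fl s : SigC <= BSd -> fl <= 1 -> cpair SigC (cpair fl (es s)) < Kd.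
Proof. by move=> H1 H2; rewrite ltnS; apply: cpair_le => //; apply: cpair_le => //; apply: ltnW; apply: es_lt. Qed.

Lemma HIST_lkp K c g : g < c -> lkpN (HIST natOps n k pR p K c) c g = VT natOps n k pR p K g.
Proof. by move=> H; rewrite /HIST /VT /CONS /=; apply: lkp_hist. Qed.

Lemma VT_lkp K c ctx : ctx < K -> lkpN (VT natOps n k pR p K c) K ctx = GC natOps n k pR p K c (HIST natOps n k pR p K c) ctx.
Proof. by move=> H; rewrite /VT /= lkp_tab. Qed.

Lemma main phi : wf arity phi ->
  (forall P l, occ P phi -> size l = arity P -> pickle P != pR ->
     I P l = (lkpN (pML p) (pNM p) (cpair (pickle P) (encL (rev (map e l)))) != 0)) ->
  forall SigC fl (Sig : {set D * D}) (sim : Var -> rel (D * D)), SigC <= BSd -> fl <= 1 ->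
  (forall s, (s \in Sig) = (MEM natOps p SigC (es s) != 0)) ->
  (forall z s s', sim z s s' = (SIM natOps p fl (var_code z) (es s) (es s') != 0)) ->
  forall s, (lkpN (VT natOps n k pR p Kd (encf phi)) Kd (cpair SigC (cpair fl (es s))) != 0)
     <-> sat k R I Ic Sig sim phi s.
Proof.
elim: phi => [P ts | t1 t2 | g IHg | g IHg h IHh | z g IHg | z t | z g IHg] Hwf HA SigC fl Sig sim HSb Hfl HS Hsim s;
  rewrite VT_lkp ?ctx_lt //.
- rewrite [encf _]/= GC0 pfstE psndE ATOM_es.
  + by simpl sat.
  + by apply/eqP.
  + by move=> Hn; apply: HA => //; [rewrite /= eqxx | rewrite size_map; apply/eqP].
- rewrite [encf _]/= GC1 !pfstE !psndE EQ_E !TVAL_es e_eq; simpl sat.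
  by split => [/eqP | ->].
- rewrite [encf _]/= GC2 NOT_E HIST_lkp ?cpair_gtb //.
  have := IHg Hwf HA SigC fl Sig sim HSb Hfl HS Hsim s; simpl sat.
  rewrite -[_ == 0]negbK; case: (_ != 0) => [[H _] | [_ H]]; split => //.
  + by move=> H2; exfalso; apply: H2; apply: H.
  + by move=> _ Hs; have := H Hs.
- move: Hwf => /= /andP [Hwg Hwh].
  have HAg : forall P l, occ P g -> size l = arity P -> pickle P != pR ->
     I P l = (lkpN (pML p) (pNM p) (cpair (pickle P) (encL (rev (map e l)))) != 0).
    by move=> P l o; apply: HA; rewrite /= o.
  have HAh : forall P l, occ P h -> size l = arity P -> pickle P != pR ->
     I P l = (lkpN (pML p) (pNM p) (cpair (pickle P) (encL (rev (map e l)))) != 0).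
    by move=> P l o; apply: HA; rewrite /= o orbT.
  have Hl1 : encf g < cpair 3 (cpair (encf g) (encf h)).
    by apply: leq_ltn_trans (cpair_gea _ _) (cpair_gtb _ _).
  have Hl2 : encf h < cpair 3 (cpair (encf g) (encf h)).
    by apply: leq_ltn_trans (cpair_geb _ _) (cpair_gtb _ _).
  rewrite [encf _]/= GC3 AND_E !pfstE !psndE (HIST_lkp _ Hl1) (HIST_lkp _ Hl2).
  have := IHg Hwg HAg SigC fl Sig sim HSb Hfl HS Hsim s.
  have := IHh Hwh HAh SigC fl Sig sim HSb Hfl HS Hsim s; simpl sat.
  move=> [H1 H2] [H3 H4]; split => [/andP [/H3 ? /H1 ?] | [/H4 -> /H2 ->]] //.
- rewrite [encf _]/= GC4 !pfstE !psndE; simpl sat.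
  have Hlt : encf g < cpair 4 (cpair (var_code z) (encf g)).
    by apply: leq_ltn_trans (cpair_geb _ _) (cpair_gtb _ _).
  split => [/BALLS_P H s2 Hr | H]. 
  + have := H s2; rewrite IMP_E RZ_es Hr /= HIST_lkp //.
    by move/(IHg Hwf HA _ _ _ _ (NEWSIG_bnd _ _ _ _ _) (leqnn 1) (fun t => NEWSIG_es z s s2 t HS Hsim) SIM1_es).
  + apply/BALLS_P => s2; rewrite IMP_E RZ_es HIST_lkp //; apply/implyP => Hr.
    by apply/(IHg Hwf HA _ _ _ _ (NEWSIG_bnd _ _ _ _ _) (leqnn 1) (fun t => NEWSIG_es z s s2 t HS Hsim) SIM1_es); apply: H.
- rewrite [encf _]/= GC5 !pfstE !psndE; simpl sat.
  split => [/BALLS_P H s1 s2 H1 H2 H3 H4 | H].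
  + have /BALLS_P := H s1 => /(_ s2).
    by rewrite !IMP_E -!HS -!Hsim H1 H2 H3 H4 /= EQ_E !TVAL_es e_eq => /eqP.
  + apply/BALLS_P => s1; apply/BALLS_P => s2.
    rewrite !IMP_E -!HS -!Hsim EQ_E !TVAL_es e_eq.
    by apply/implyP => H1; apply/implyP => H2; apply/implyP => H3; apply/implyP => H4; apply/eqP; apply: H.
- rewrite [encf _]/= GC6 !pfstE !psndE; simpl sat.
  have Hlt : encf g < cpair 6 (cpair (var_code z) (encf g)).
    by apply: leq_ltn_trans (cpair_geb _ _) (cpair_gtb _ _).
  split => [/BALLS_P H s' H1 H2 | H].
  + have := H s'; rewrite !IMP_E -HS -Hsim H1 H2 /= HIST_lkp //.
    by move/(IHg Hwf HA _ _ _ _ HSb Hfl HS Hsim).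
  + apply/BALLS_P => s'; rewrite !IMP_E -HS -Hsim HIST_lkp //.
    apply/implyP => H1; apply/implyP => H2.
    by apply/(IHg Hwf HA _ _ _ _ HSb Hfl HS Hsim); apply: H.
Qed.
End Main.

Arguments bexB : simpl never.
Arguments iterR : simpl never.
Arguments bminN : simpl never.

Definition NMc n code := (cpair code (BND natOps n code)).+1.

Definition GOOD n k pR code d ICL RL ML SX SY Sig0 :=
  let p := Prm d ICL RL ML (NMc n code) SX SY in
  0 < d /\ ICOK natOps n p != 0 /\ SERIAL natOps p != 0 /\ SIMOK natOps p Sig0 != 0 /\
      KSIGHT natOps k p Sig0 != 0 /\
      BEXS natOps p (fun s => nat_of_bool ((MEM natOps p Sig0 s != 0) &&
         (lkpN (VT natOps n k pR p (Kd p) code) (Kd p) (cpair Sig0 (cpair 0 s)) != 0))) != 0.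

Definition BOUNDS n code d ICL RL ML SX SY Sig0 :=
  d < n.+1 /\ ICL < (BND natOps n n).+1 /\ RL < (BND natOps 1 (cpair d d)).+1 /\
      ML < (BND natOps 1 (NMc n code)).+1 /\ SX < (BND natOps 1 (cpair (cpair d d) (cpair d d))).+1 /\
      SY < (BND natOps 1 (cpair (cpair d d) (cpair d d))).+1 /\
      Sig0 < (BND natOps 1 (cpair d d)).+1.

Lemma nbexP n P : reflect (exists2 i, i < n & P i != 0) (nat_of_bool (bexB n P) != 0).
Proof. by rewrite nbK; apply: bexBP. Qed.
Lemma nandP (a b : bool) : reflect (a /\ b) (nat_of_bool (a && b) != 0).
Proof. by rewrite nbK; apply: andP. Qed.

Lemma DEC_iff n k pR code : DEC natOps n k pR code != 0 <->
  exists d ICL RL ML SX SY Sig0, BOUNDS n code d ICL RL ML SX SY Sig0 /\ GOOD n k pR code d ICL RL ML SX SY Sig0.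
Proof.
split.
- rewrite /DEC /=.
  move=> /nbexP [d Hd /nandP [H0 /nbexP [ICL HI /nbexP [RL HR /nbexP [ML HM /nbexP [SX HX /nbexP [SY HY
     /nandP [HIC /nandP [HSE /nbexP [Sig0 HS /nandP [HSI /nandP [HKS HB]]]]]]]]]]]].
  move: H0; rewrite nbK => H0.
  by exists d, ICL, RL, ML, SX, SY, Sig0; split; repeat split; assumption.
- move=> [d [ICL [RL [ML [SX [SY [Sig0 [[Hd [HI [HR [HM [HX [HY HS]]]]]] [H0 [HIC [HSE [HSI [HKS HB]]]]]]]]]]]]].
  rewrite /DEC.
  apply/BEX_P; exists d => //; rewrite AND_E LT_E H0 /=.
  apply/BEX_P; exists ICL => //; apply/BEX_P; exists RL => //; apply/BEX_P; exists ML => //.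
  apply/BEX_P; exists SX => //; apply/BEX_P; exists SY => //; rewrite AND_E HIC /=.
  rewrite AND_E HSE /=; apply/BEX_P; exists Sig0 => //; rewrite AND_E HSI /=.
  by rewrite AND_E HKS.
Qed.


Arguments bexB : simpl never.
Arguments iterR : simpl never.
Arguments bminN : simpl never.

Lemma occ_pickle (Pred : countType) (Cons : finType) (P : Pred) (phi : form Pred Cons) :
  occ P phi -> pickle P <= encf phi.
Proof.
elim: phi => [Q ts|t1 t2|g IH|g IHg h IHh|z g IH|z t|z g IH] //=.
- move=> /eqP ->; apply: leq_trans (cpair_geb _ _); exact: cpair_gea.
- move=> /IH H; apply: leq_trans H (cpair_geb _ _).
- move=> /orP [/IHg H | /IHh H]; apply: (leq_trans H); apply: leq_trans (cpair_geb _ _).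
  + exact: cpair_gea.
  + exact: cpair_geb.
- move=> /IH H; apply: (leq_trans H); apply: leq_trans (cpair_geb _ _); exact: cpair_geb.
- move=> /IH H; apply: (leq_trans H); apply: leq_trans (cpair_geb _ _); exact: cpair_geb.
Qed.

Lemma occ_arity (Pred : countType) (Cons : finType) (arity : Pred -> nat) (P : Pred) (phi : form Pred Cons) :
  wf arity phi -> occ P phi -> arity P <= encf phi.
Proof.
elim: phi => [Q ts|t1 t2|g IH|g IHg h IHh|z g IH|z t|z g IH] //=.
- move=> /eqP Hs /eqP E; rewrite -E -Hs; apply: leq_trans (cpair_geb _ _).
  apply: leq_trans (cpair_geb _ _); rewrite encts_encL.
  by apply: leq_trans (encL_size _); rewrite size_map.
- move=> Hw /(IH Hw) H; apply: leq_trans H (cpair_geb _ _).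
- move=> /andP [Hg Hh] /orP [/(IHg Hg) H | /(IHh Hh) H]; apply: (leq_trans H); apply: leq_trans (cpair_geb _ _).
  + exact: cpair_gea.
  + exact: cpair_geb.
- move=> Hw /(IH Hw) H; apply: (leq_trans H); apply: leq_trans (cpair_geb _ _); exact: cpair_geb.
- move=> Hw /(IH Hw) H; apply: (leq_trans H); apply: leq_trans (cpair_geb _ _); exact: cpair_geb.
Qed.

Definition asb (P : Prop) : bool := if excluded_middle_informative P then true else false.
Lemma asbP (P : Prop) : reflect P (asb P).
Proof. by rewrite /asb; case: excluded_middle_informative => H; constructor. Qed.

Lemma ANDP a b : reflect ((a != 0) /\ (b != 0)) (oand natOps a b != 0).
Proof. by rewrite AND_E; apply: andP. Qed.

Section Complete.
Variables (k : nat) (Pred : countType) (arity : Pred -> nat) (R : Pred) (Cons : finType).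
Hypothesis HarR : arity R = 2.
Variable phi : form Pred Cons.
Hypothesis Hwf : wf arity phi.
Variable M : model Pred Cons.
Hypotheses (HM : is_model arity R M) (HK : ksight k R M).
Local Notation D := (mD Pred Cons M).
Local Notation IM := (mI Pred Cons M).
Local Notation IcM := (mIc Pred Cons M).
Local Notation SigM := (mSigma Pred Cons M).
Local Notation simM := (msim Pred Cons M).
Variable s0 : D * D.
Hypotheses (Hs0 : s0 \in SigM) (Hsat : sat k R (IM) (IcM) (SigM) (simM) phi s0).
Local Notation n := #|Cons|.
Local Notation code := (encf phi).

Definition eM (x : D) := index x (enum D).
Definition einv (a : nat) := nth s0.1 (enum D) a.

Lemma eM_lt x : eM x < #|D|.
Proof. by rewrite /eM cardE index_mem mem_enum. Qed.
Lemma einvK x : einv (eM x) = x.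
Proof. by rewrite /einv /eM nth_index // mem_enum. Qed.
Lemma eM_inj : injective eM.
Proof. exact: can_inj einvK. Qed.
Lemma eM_surj a : a < #|D| -> exists x, eM x = a.
Proof. by move=> H; exists (einv a); rewrite /eM /einv index_uniq // ?enum_uniq // -cardE. Qed.

Lemma Dle : #|D| <= n.
Proof.
case: HM => [_ [_ [_ [Hsurj _]]]].
have E : [set: D] = IcM @: [set: Cons].
  apply/setP => x; rewrite inE; have [c <-] := Hsurj x.
  by apply/esym/imsetP; exists c; rewrite ?inE.
by rewrite -cardsT E; apply: leq_trans (leq_imset_card _ _) _; rewrite cardsT.
Qed.

Lemma c0_ex : exists c0 : Cons, True.
Proof. by case: HM => [_ [_ [_ [Hsurj _]]]]; have [c _] := Hsurj s0.1; exists c. Qed.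

Definition dec2 (q : nat) := (einv (pfst q), einv (psnd q)).
Lemma dec2K s : dec2 (es eM s) = s.
Proof. by case: s => a b; rewrite /dec2 /es /= pfstE psndE !einvK. Qed.

Definition dM := #|D|.
Definition NMv := NMc n code.
Definition MLv := tabN NMv (fun idx => nat_of_bool (asb (exists P l, occ P phi /\ size l = arity P /\
   idx = cpair (pickle P) (encL (rev (map eM l))) /\ IM P l))).
Definition RLv := tabN (cpair dM dM) (fun idx => nat_of_bool (Rrel R (IM) (einv (pfst idx)) (einv (psnd idx)))).
Definition SXv := tabN (cpair (cpair dM dM) (cpair dM dM))
   (fun idx => nat_of_bool (simM vx (dec2 (pfst idx)) (dec2 (psnd idx)))).
Definition SYv := tabN (cpair (cpair dM dM) (cpair dM dM))
   (fun idx => nat_of_bool (simM vy (dec2 (pfst idx)) (dec2 (psnd idx)))).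
Definition Sig0v := tabN (cpair dM dM) (fun idx => nat_of_bool (dec2 idx \in SigM)).

Section WithC0.
Variable c0 : Cons.
Definition ICLv := tabN n (fun j => eM (IcM (nth c0 (enum Cons) j))).
Definition pv := Prm dM ICLv RLv MLv NMv SXv SYv.

Lemma HICv c : lkpN (pIC pv) n (enum_rank c) = eM (IcM c).
Proof. by rewrite /= /ICLv lkp_tab ?ltn_ord // nth_enum_rank. Qed.

Lemma HRLv a b : (lkpN (pRL pv) (cpair (pd pv) (pd pv)) (cpair (eM a) (eM b)) != 0) = Rrel R (IM) a b.
Proof.
rewrite /= /RLv lkp_tab ?nbK ?pfstE ?psndE ?einvK //.
by have := @es_lt _ pv eM eM_lt (a, b).
Qed.

Lemma HSv s : (s \in SigM) = (MEM natOps pv Sig0v (es eM s) != 0).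
Proof. by rewrite (@MEM_tab _ pv eM eM_lt) nbK dec2K. Qed.

Lemma Hsimv z s s' : simM z s s' = (SIM natOps pv 0 (var_code z) (es eM s) (es eM s') != 0).
Proof.
rewrite /SIM /=.
have Hlt : cpair (es eM s) (es eM s') < cpair (cpair dM dM) (cpair dM dM).
  apply: (@leq_trans (cpair (es eM s) (cpair dM dM))); first by apply: cpair_ltr; apply: (@es_lt _ pv eM eM_lt).
  by apply: cpair_le => //; apply: ltnW; apply: (@es_lt _ pv eM eM_lt).
by case: z => /=; rewrite /SS /DD /= ?/SXv ?/SYv lkp_tab // nbK !pfstE !psndE !dec2K.
Qed.

Lemma eM_ltv x : eM x < pd pv. Proof. exact: eM_lt. Qed.
Lemma eM_surjv a : a < pd pv -> exists x, eM x = a. Proof. exact: eM_surj. Qed.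

Lemma HAv P l : occ P phi -> size l = arity P -> pickle P != pickle R ->
  IM P l = (lkpN (pML pv) (pNM pv) (cpair (pickle P) (encL (rev (map eM l)))) != 0).
Proof.
move=> Ho Hs _; rewrite /= /MLv lkp_tab; last first.
  rewrite /NMv /NMc ltnS; apply: cpair_le; first exact: occ_pickle.
  apply: encL_bnd; first by rewrite size_rev size_map Hs; apply: occ_arity.
  rewrite all_rev all_map; apply/allP => x _ /=; apply: leq_trans (ltnW (eM_lt x)) Dle.
rewrite nbK; case: (asbP _) => [[P' [l' [Ho' [Hs' [E HI]]]]] | H].
- move: E => /cpair_inj [/(pcan_inj pickleK) EP /encL_inj /(inv_inj revK) /(inj_map eM_inj) El].
  by rewrite EP El.
- apply/negbTE/negP => HI; apply: H; by exists P, l.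
Qed.

Lemma Sig0_bnd : Sig0v <= BSd pv.
Proof. by apply: tab_bnd => i _; apply: nb_le1. Qed.

Lemma SEQV_ok z : SEQV natOps pv Sig0v (var_code z) != 0.
Proof.
case: HM => [_ [_ [_ [_ [_ Heqv]]]]]; have [Hr [Hs Ht]] := Heqv z.
rewrite /SEQV !AND_E; apply/and3P; split.
- apply/(BALLS_P eM_ltv eM_surjv) => s; rewrite IMP_E -HSv; apply/implyP => H.
  by rewrite -Hsimv; apply: Hr.
- apply/(BALLS_P eM_ltv eM_surjv) => s; apply/(BALLS_P eM_ltv eM_surjv) => t.
  rewrite !IMP_E -!HSv -!Hsimv; apply/implyP => H1; apply/implyP => H2; apply/implyP => H3.
  by apply: Hs.
- apply/(BALLS_P eM_ltv eM_surjv) => s; apply/(BALLS_P eM_ltv eM_surjv) => t; apply/(BALLS_P eM_ltv eM_surjv) => u.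
  rewrite !IMP_E -!HSv -!Hsimv; apply/implyP => H1; apply/implyP => H2; apply/implyP => H3.
  by apply/implyP => H4; apply/implyP => H5; apply: (Ht s t u).
Qed.

Lemma KS1_ok z z' : KS1 natOps k pv Sig0v (ocst natOps (var_code z)) (ocst natOps (var_code z')) != 0.
Proof.
apply/(BALLS_P eM_ltv eM_surjv) => s; apply/(BALLS_P eM_ltv eM_surjv) => s'.
rewrite !IMP_E -!HSv -Hsimv /= !GETZ_es (DL_es eM_inj eM_ltv eM_surjv HRLv) EQ_E.
apply/implyP => H1; apply/implyP => H2; apply/implyP => H3; apply/implyP => H4.
by apply/eqP; congr eM; apply: (HK H1 H2 H3 H4).
Qed.

Lemma GOOD_ok : GOOD #|Cons| k (pickle R) code dM ICLv RLv MLv SXv SYv Sig0v.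
Proof.
case: HM => [_ [_ [Hser [Hsurj _]]]].
split; first by rewrite /dM; apply/card_gt0P; exists s0.1.
split.
  rewrite /ICOK AND_E; apply/andP; split.
  - apply/BALL_P => j Hj; rewrite LT_E /ICV; change (lkpN ICLv #|Cons| j < dM); rewrite /ICLv lkp_tab //; exact: eM_lt.
  - apply/(BALL_D eM_ltv eM_surjv) => x.
    apply/BEX_P.
    have [c <-] := Hsurj x.
    exists (enum_rank c).
    by [].
    rewrite EQ_E /ICV.
    apply/eqP.
    change (lkpN (pIC pv) #|Cons| (enum_rank c) = eM (IcM c)).
    exact: (HICv c).
split.
  rewrite /SERIAL; apply/(BALL_D eM_ltv eM_surjv) => a; apply/(BEX_D eM_ltv eM_surjv).
  by have [b Hb] := Hser a; exists b; rewrite (RREL_e HRLv).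
split.
  by rewrite /SIMOK AND_E; apply/andP; split; [exact: (SEQV_ok vx) | exact: (SEQV_ok vy)].
split.
  rewrite /KSIGHT; apply/ANDP; split; apply/ANDP; split.
  - exact: (KS1_ok vx vx).
  - exact: (KS1_ok vx vy).
  - exact: (KS1_ok vy vx).
  - exact: (KS1_ok vy vy).
apply/(BEXS_P eM_ltv eM_surjv); exists s0; rewrite nbK -HSv Hs0 /=.
by apply/(main k HarR eM_inj eM_ltv eM_surjv HICv HRLv Hwf HAv Sig0_bnd (leq0n 1) HSv Hsimv s0).
Qed.

Lemma BOUNDS_ok : BOUNDS #|Cons| code dM ICLv RLv MLv SXv SYv Sig0v.
Proof.
have Hb : forall L f, tabN L (fun i => nat_of_bool (f i)) < (BND natOps 1 L).+1.
  by move=> L f; rewrite ltnS; apply: tab_bnd => i _; apply: nb_le1.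
split; first by rewrite ltnS; apply: Dle.
split; first by rewrite ltnS; apply: tab_bnd => i _; apply: leq_trans (ltnW (eM_lt _)) Dle.
split; first exact: Hb.
split; first exact: Hb.
split; first exact: Hb.
split; first exact: Hb.
exact: Hb.
Qed.
End WithC0.
Lemma complete_dec : DEC natOps #|Cons| k (pickle R) code != 0.
Proof.
have [c0 _] := c0_ex; apply/DEC_iff.
exists dM, (ICLv c0), RLv, MLv, SXv, SYv, Sig0v; split; [exact: BOUNDS_ok | exact: GOOD_ok].
Qed.
End Complete.

Section Sound.
Variables (k : nat) (Pred : countType) (arity : Pred -> nat) (R : Pred) (Cons : finType).
Hypothesis HarR : arity R = 2.
Variable phi : form Pred Cons.
Hypothesis Hwf : wf arity phi.
Local Notation n := #|Cons|.
Local Notation code := (encf phi).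
Variables (d' ICL RL ML SX SY Sig0 : nat).
Local Notation d := d'.+1.
Definition ps := Prm d ICL RL ML (NMc n code) SX SY.
Hypothesis HG : GOOD n k (pickle R) code d ICL RL ML SX SY Sig0.
Hypothesis HB : BOUNDS n code d ICL RL ML SX SY Sig0.

Local Notation D := (ordinal d).
Definition vs (x : D) : nat := x.
Definition IMs (P : Pred) : pred (seq D) := fun l =>
  (size l == arity P) && (if pickle P == pickle R
     then RREL natOps ps (nth 0 (map vs l) 0) (nth 0 (map vs l) 1) != 0
     else lkpN ML (NMc n code) (cpair (pickle P) (encL (rev (map vs l)))) != 0).
Definition IcMs (c : Cons) : D := inord (lkpN ICL n (enum_rank c)).
Definition SigMs : {set D * D} := [set s : D * D | MEM natOps ps Sig0 (es vs s) != 0].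
Definition simMs (z : Var) : rel (D * D) := fun s s' => SIM natOps ps 0 (var_code z) (es vs s) (es vs s') != 0.
Definition Ms := Model Pred Cons D IMs IcMs SigMs simMs.

Lemma vs_inj : injective vs. Proof. exact: val_inj. Qed.
Lemma vs_lt x : vs x < pd ps. Proof. exact: ltn_ord. Qed.
Lemma vs_surj a : a < pd ps -> exists x, vs x = a.
Proof. by move=> H; exists (Ordinal H). Qed.

Lemma GOODs : [/\ ICOK natOps n ps != 0, SERIAL natOps ps != 0, SIMOK natOps ps Sig0 != 0,
   KSIGHT natOps k ps Sig0 != 0 &
   BEXS natOps ps (fun s => nat_of_bool ((MEM natOps ps Sig0 s != 0) &&
         (lkpN (VT natOps n k (pickle R) ps (Kd ps) code) (Kd ps) (cpair Sig0 (cpair 0 s)) != 0))) != 0].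
Proof. by case: HG => [_ [H1 [H2 [H3 [H4 H5]]]]]. Qed.

Lemma ICLlt j : j < n -> lkpN ICL n j < d.
Proof.
case: GOODs => /ANDP [/BALL_P H _] _ _ _ _ Hj.
by have := H j Hj; rewrite LT_E.
Qed.

Lemma HICs c : lkpN (pIC ps) n (enum_rank c) = vs (IcMs c).
Proof. by rewrite /vs /IcMs /= inordK // ICLlt. Qed.

Lemma HRLs a b : (lkpN (pRL ps) (cpair (pd ps) (pd ps)) (cpair (vs a) (vs b)) != 0) = Rrel R IMs a b.
Proof. by rewrite /Rrel /IMs /= HarR !eqxx /= /RREL /DD /=. Qed.

Lemma HAs P l : occ P phi -> size l = arity P -> pickle P != pickle R ->
  IMs P l = (lkpN (pML ps) (pNM ps) (cpair (pickle P) (encL (rev (map vs l)))) != 0).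
Proof. by move=> _ Hs Hn; rewrite /IMs Hs eqxx (negbTE Hn). Qed.

Lemma HSs s : (s \in SigMs) = (MEM natOps ps Sig0 (es vs s) != 0).
Proof. by rewrite inE. Qed.

Lemma Hsims z s s' : simMs z s s' = (SIM natOps ps 0 (var_code z) (es vs s) (es vs s') != 0).
Proof. by []. Qed.

Lemma Sig0s : Sig0 <= BSd ps.
Proof. by case: HB => [_ [_ [_ [_ [_ [_ H]]]]]]. Qed.

Lemma SEQV_s z : SEQV natOps ps Sig0 (ocst natOps (var_code z)) != 0 ->
  [/\ forall s, s \in SigMs -> simMs z s s,
      forall s t, s \in SigMs -> t \in SigMs -> simMs z s t -> simMs z t s &
      forall s t u, s \in SigMs -> t \in SigMs -> u \in SigMs -> simMs z s t -> simMs z t u -> simMs z s u].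
Proof.
rewrite /SEQV => /ANDP [Hr /ANDP [Hs Ht]]; split.
- move=> s Hs1; move: Hr => /(BALLS_P vs_lt vs_surj) /(_ s).
  by rewrite IMP_E -HSs Hs1 /=.
- move=> s t H1 H2 H3; move: Hs => /(BALLS_P vs_lt vs_surj) /(_ s) /(BALLS_P vs_lt vs_surj) /(_ t).
  by rewrite !IMP_E -!HSs H1 H2 /= -Hsims H3 /=.
- move=> s t u H1 H2 H3 H4 H5; move: Ht => /(BALLS_P vs_lt vs_surj) /(_ s) /(BALLS_P vs_lt vs_surj) /(_ t)
    /(BALLS_P vs_lt vs_surj) /(_ u).
  by rewrite !IMP_E -!HSs H1 H2 H3 /= -!Hsims H4 H5 /=.
Qed.

Lemma KS1_s z z' : KS1 natOps k ps Sig0 (ocst natOps (var_code z)) (ocst natOps (var_code z')) != 0 ->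
  forall s s', s \in SigMs -> s' \in SigMs -> simMs z s s' -> get s z' \in Dk R IMs k (get s z) ->
  get s z' = get s' z'.
Proof.
move=> /(BALLS_P vs_lt vs_surj) H s s' H1 H2 H3 H4.
move: (H s) => /(BALLS_P vs_lt vs_surj) /(_ s').
rewrite !IMP_E -!HSs H1 H2 /= -Hsims H3 /= !GETZ_es (DL_es vs_inj vs_lt vs_surj HRLs) H4 /= EQ_E.
by move=> /eqP /vs_inj.
Qed.

Lemma sound_sat : satisfiable k arity R phi.
Proof.
case: GOODs => HIC HSE HSI HKS HBX.
exists Ms; split; last split.
- split; first by exists ord0.
  split; first by move=> P l /andP [/eqP].
  split.
    move=> a; move: HSE => /(BALL_D vs_lt vs_surj) /(_ a) /(BEX_D vs_lt vs_surj) [b Hb].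
    by exists b; rewrite /= /IMs /= HarR !eqxx /=.
  split.
    move=> x; move: HIC => /ANDP [_ /(BALL_D vs_lt vs_surj) /(_ x) /BEX_P [j Hj]].
    rewrite EQ_E => /eqP Ej; exists (enum_val (Ordinal Hj)).
    apply: val_inj; rewrite /= /IcMs enum_valK /= inordK //.
    by move: Ej; rewrite /ICV /= => ->; apply: ltn_ord.
  split.
    move: HBX => /(BEXS_P vs_lt vs_surj) [s]; rewrite nbK => /andP [Hs _].
    by exists s; rewrite /= HSs.
  move=> z; move: HSI; rewrite /SIMOK => /ANDP [H0 H1].
  by case: z; [case: (@SEQV_s vx H0) => ? ? ?| case: (@SEQV_s vy H1) => ? ? ?]; split.
- move: HKS; rewrite /KSIGHT => /ANDP [/ANDP [H00 H01] /ANDP [H10 H11]].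
  by move=> [] [] s s'; [apply: (@KS1_s vx vx H00) | apply: (@KS1_s vx vy H01) | apply: (@KS1_s vy vx H10) | apply: (@KS1_s vy vy H11)].
- move: HBX => /(BEXS_P vs_lt vs_surj) [s]; rewrite nbK => /andP [Hs Hv].
  exists s; split; first by rewrite /= HSs.
  by apply/(main k HarR vs_inj vs_lt vs_surj HICs HRLs Hwf HAs Sig0s (leq0n 1) HSs Hsims s).
Qed.
End Sound.

Lemma DEC_le1 n k pR code : DEC natOps n k pR code <= 1.
Proof. exact: nb_le1. Qed.

Theorem corollary2 (k : nat) (Pred : countType) (arity : Pred -> nat) (R : Pred)
  (Cons : finType) :
  arity R = 2 -> 0 < #|Cons| ->
  exists c : mu, forall phi : form Pred Cons,
    inL phi -> wf arity phi ->
    (satisfiable k arity R phi -> eval c [:: encf phi] 1) /\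
    (~ satisfiable k arity R phi -> eval c [:: encf phi] 0).
Proof.
move=> HarR _.
exists (cmp 1 (tr (DEC synOps #|Cons| k (pickle R) (lv 0) 1))) => phi _ Hwf.
have E := @hden_computable (DEC synOps #|Cons| k (pickle R) (lv 0) 1) 1 [:: encf phi] erefl.
rewrite bridge in E.
have Hle := DEC_le1 #|Cons| k (pickle R) (encf phi).
split.
- move=> [M [HM [HK [s0 [Hs0 Hsat]]]]].
  have H := complete_dec HarR Hwf HM HK Hs0 Hsat.
  suff E1 : DEC natOps #|Cons| k (pickle R) (encf phi) = 1 by rewrite E1 in E.
  by move: H Hle; case: (DEC natOps #|Cons| k (pickle R) (encf phi)) => [|[|m]].
- move=> Hns.
  suff E0 : DEC natOps #|Cons| k (pickle R) (encf phi) = 0 by rewrite E0 in E.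
  apply/eqP; apply/negPn/negP => H; apply: Hns.
  move: H => /DEC_iff [[|d'] [ICL [RL [ML [SX [SY [Sig0 [HB HG]]]]]]]].
  + by case: HG.
  + exact: (sound_sat HarR Hwf HG HB).
Qed.
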